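(* Let $(p_1,\alpha^1,\beta^1)$ and $(p_2,\alpha^2,\beta^2)$ be two equilibria with demand maps $D_1,D_2$. For $\mu$-almost every $x$ the following holds: if $D_1(x)=\{d_1(x)\}$ is a singleton, then $d_1(x)\in D_2(x)$; and if moreover $D_2(x)=\{d_2(x)\}$ is a singleton, then $d_1(x)=d_2(x)$.
   Context: Standing setting. $X\subset\mathbb R^{d_1}$, $Y\subset\mathbb R^{d_2}$, $Z_0\subset\mathbb R^{d_3}$ compact; $\mu,\nu$ finite nonnegative Borel measures on $X,Y$. $u$ continuous on a neighbourhood of $X\times Z_0$, differentiable in $x$ with $D_xu$ continuous; $v$ continuous on a neighbourhood of $Y\times Z_0$, differentiable in $y$ with $D_yv$ continuous. $Z=Z_0\cup\{\varnothing_d\}\cup\{\varnothing_s\}$ with two distinct isolated extra points; $u(x,\varnothing_d)=0$, $u(x,\varnothing_s)=-1$, $v(y,\varnothing_s)=0$, $v(y,\varnothing_d)=1$. $b(z)=\max_x u(x,z)$, $a(z)=\min_y v(y,z)$, $Z_1=\{z\in Z:a(z)\le b(z)\}$. A price system is a continuous $p:Z\to\mathbb R$ with $p(\varnothing_d)=p(\varnothing_s)=0$, admissible if $a\le p\le b$ on $Z_1$. $D(x)=\arg\max_{z\in Z}\{u(x,z)-p(z)\}$, $S(y)=\arg\min_{z\in Z}\{v(y,z)-p(z)\}$. A demand (resp. supply) distribution associated with $p$ is a positive Borel measure on $X\times Z$ (resp. $Y\times Z$) carried by the graph of $D$ (resp. $S$) with $X$-marginal $\mu$ (resp. $Y$-marginal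 $\nu$). An equilibrium is $(p,\alpha,\beta)$ with $p$ admissible, $\alpha,\beta$ associated demand and supply distributions, and equal $Z$-marginals on Borel subsets of $Z_0$. $D_i$ is the demand map for $p_i$. *)

(* Defs.v *)
From HB Require Import structures.
From mathcomp Require Import all_boot all_order all_algebra.
From mathcomp Require Import all_classical all_reals all_analysis.
Set Implicit Arguments. Unset Strict Implicit. Unset Printing Implicit Defensive.
Import Order.TTheory GRing.Theory Num.Theory.
Import numFieldNormedType.Exports.
Local Open Scope classical_set_scope.
Local Open Scope ring_scope.

(** The set Z = Z0 ∪ {∅_d} ∪ {∅_s}: the ambient type of "goods" consists of
    points of R^d3 (tagged Zgood) plus two distinct extra points. *)
Inductive Zpt (R : realType) (d : nat) : Type :=
  | Zgood of 'rV[R]_d | Zempty_d | Zempty_s.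
Arguments Zgood {R d}. Arguments Zempty_d {R d}. Arguments Zempty_s {R d}.

Section ZptInstances.
Variables (R : realType) (d : nat).
Definition Zpt_to (z : Zpt R d) : ('rV[R]_d + bool)%type :=
  match z with Zgood x => inl x | Zempty_d => inr true | Zempty_s => inr false end.
Definition Zpt_of (s : ('rV[R]_d + bool)%type) : Zpt R d :=
  match s with inl x => Zgood x | inr true => Zempty_d | inr false => Zempty_s end.
Lemma Zpt_toK : cancel Zpt_to Zpt_of. Proof. by case. Qed.
HB.instance Definition _ := Choice.copy (Zpt R d) (can_type Zpt_toK).
HB.instance Definition _ := isPointed.Build (Zpt R d) Zempty_d.
End ZptInstances.

Section Market.
Variables (R : realType) (d1 d2 d3 : nat).

Definition Bor (d : nat) := g_sigma_algebraType (open : set (set 'rV[R]_d)).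

Definition GZ : set (set (Zpt R d3)) :=
  [set A | (exists2 O : set 'rV[R]_d3, open O & A = Zgood @` O)
           \/ A = [set Zempty_d] \/ A = [set Zempty_s]].
Definition ZT := g_sigma_algebraType GZ.

Definition Zset (Z0 : set 'rV[R]_d3) : set (Zpt R d3) :=
  [set z | match z with Zgood z0 => Z0 z0 | _ => True end].

Definition uZ (u : 'rV[R]_d1 -> 'rV[R]_d3 -> R) (x : 'rV[R]_d1) (z : Zpt R d3) : R :=
  match z with Zgood z0 => u x z0 | Zempty_d => 0 | Zempty_s => -1 end.
Definition vZ (v : 'rV[R]_d2 -> 'rV[R]_d3 -> R) (y : 'rV[R]_d2) (z : Zpt R d3) : R :=
  match z with Zgood z0 => v y z0 | Zempty_s => 0 | Zempty_d => 1 end.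

(** b(z) = max_{x in X} u(x,z), a(z) = min_{y in Y} v(y,z)
    (written as sup / inf; for X, Y nonempty compact and u, v continuous these
    are attained). *)
Definition bfun (X : set 'rV[R]_d1) u (z : Zpt R d3) : R := sup [set uZ u x z | x in X].
Definition afun (Y : set 'rV[R]_d2) v (z : Zpt R d3) : R := inf [set vZ v y z | y in Y].

(** A price system: continuous on Z (the extra points are isolated, so this
    amounts to continuity on Z0), vanishing at ∅_d and ∅_s. *)
Definition price_system (Z0 : set 'rV[R]_d3) (p : Zpt R d3 -> R) : Prop :=
  [/\ p Zempty_d = 0, p Zempty_s = 0 &
      {within Z0, continuous (fun z0 => p (Zgood z0))}].

Definition admissible X Y Z0 u v (p : Zpt R d3 -> R) : Prop :=
  price_system Z0 p /\
  forall z, Zset Z0 z -> afun Y v z <= bfun X u z ->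
    afun Y v z <= p z <= bfun X u z.

Definition demand Z0 u (p : Zpt R d3 -> R) (x : 'rV[R]_d1) : set (Zpt R d3) :=
  [set z | Zset Z0 z /\
     forall z', Zset Z0 z' -> uZ u x z' - p z' <= uZ u x z - p z].
Definition supply Z0 v (p : Zpt R d3 -> R) (y : 'rV[R]_d2) : set (Zpt R d3) :=
  [set z | Zset Z0 z /\
     forall z', Zset Z0 z' -> vZ v y z - p z <= vZ v y z' - p z'].

Definition demand_distribution X Z0 u p (mu : set (Bor d1) -> \bar R)
    (alpha : {measure set (Bor d1 * ZT)%type -> \bar R}) : Prop :=
  alpha.-negligible (~` [set q | X q.1 /\ demand Z0 u p q.1 q.2]) /\
  forall A : set (Bor d1), measurable A -> alpha (A `*` setT) = mu A.

Definition supply_distribution Y Z0 v p (nu : set (Bor d2) -> \bar R)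
    (beta : {measure set (Bor d2 * ZT)%type -> \bar R}) : Prop :=
  beta.-negligible (~` [set q | Y q.1 /\ supply Z0 v p q.1 q.2]) /\
  forall A : set (Bor d2), measurable A -> beta (A `*` setT) = nu A.

Definition equilibrium X Y Z0 mu nu u v p
    (alpha : {measure set (Bor d1 * ZT)%type -> \bar R})
    (beta : {measure set (Bor d2 * ZT)%type -> \bar R}) : Prop :=
  [/\ admissible X Y Z0 u v p,
      demand_distribution X Z0 u p mu alpha,
      supply_distribution Y Z0 v p nu beta &
      forall B : set (Bor d3), measurable B -> B `<=` Z0 ->
        alpha (setT `*` (Zgood @` B)) = beta (setT `*` (Zgood @` B))].

End Market.

(** f is continuous on a neighbourhood U of A × Z0, differentiable in its
    first variable there, with continuous partial differential D_1 f
    (expressed through the directional derivatives 'D_w, which are the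
    values of the linear map D_1 f). *)
Definition regular_near (R : realType) (n m : nat)
    (A : set 'rV[R]_n) (Z0 : set 'rV[R]_m) (f : 'rV[R]_n -> 'rV[R]_m -> R) : Prop :=
  exists U : set ('rV[R]_n * 'rV[R]_m),
    [/\ open U, A `*` Z0 `<=` U,
        forall q, U q -> {for q, continuous (fun q' : 'rV[R]_n * 'rV[R]_m => f q'.1 q'.2)},
        forall q, U q -> differentiable (fun x => f x q.2) q.1 &
        forall (w : 'rV[R]_n) q, U q ->
          {for q, continuous (fun q' : 'rV[R]_n * 'rV[R]_m =>
                                'D_w (fun x => f x q'.2) q'.1)}].

(* Main.v *)
Require Import Defs.
From HB Require Import structures.
From mathcomp Require Import all_boot all_order all_algebra.
From mathcomp Require Import all_classical all_reals all_analysis.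
From mathcomp Require Import ring lra measurable_realfun.
Import Order.TTheory GRing.Theory Num.Theory.
Import numFieldNormedType.Exports.
Local Open Scope classical_set_scope.
Local Open Scope ring_scope.
Set Implicit Arguments. Unset Strict Implicit. Unset Printing Implicit Defensive.
Lemma relopen (T : topologicalType) (S P : set T) :
  (forall x, S x -> P x -> \forall y \near x, S y -> P y) ->
  exists2 O, open O & S `&` P = S `&` O.
Proof.
move=> H; exists (\bigcup_(x in S `&` P) [set y | S y -> P y]°).
  by apply: bigcup_open => x _; exact: open_interior.
apply/seteqP; split => y [Sy].
  by move=> Py; split => //; exists y => //; exact: H.
by move=> [x _ /interior_subset]; move/(_ Sy) => Py.
Qed.

Lemma mBor_open (R : realType) n (O : set 'rV[R]_n) :
  open O -> measurable (O : set (Bor R n)).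
Proof. by move=> oO; exact: sub_sigma_algebra. Qed.

Lemma mBor_closed (R : realType) n (O : set 'rV[R]_n) :
  closed O -> measurable (O : set (Bor R n)).
Proof.
move=> cO; rewrite -(setCK O); apply: measurableC; apply: mBor_open.
by rewrite openC.
Qed.

Lemma meas_gt (R : realType) d (T : measurableType d) (A : set T) (f : T -> R) :
  (forall c, measurable (A `&` [set x | c < f x])) -> measurable_fun A f.
Proof.
move=> H; apply: (measurability _ (RGenOInfty.measurableE R)).
move=> _ [_ [c ->] <-]; rewrite (_ : _ @^-1` _ = [set x | c < f x]).
  exact: H.
by apply/seteqP; split => x /=; rewrite in_itv /= andbT.
Qed.

Lemma rV_hausdorff (R : realType) n : hausdorff_space 'rV[R]_n.
Proof. exact: norm_hausdorff. Qed.
Section ZTmeas.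
Variables (R : realType) (d : nat).
Local Notation ZTd := (ZT R d).

Lemma mZgood (O : set 'rV[R]_d) : open O -> measurable (Zgood @` O : set ZTd).
Proof. by move=> oO; apply: sub_sigma_algebra; left; exists O. Qed.
Lemma mZd : measurable ([set Zempty_d] : set ZTd).
Proof. by apply: sub_sigma_algebra; right; left. Qed.
Lemma mZs : measurable ([set Zempty_s] : set ZTd).
Proof. by apply: sub_sigma_algebra; right; right. Qed.

Lemma mZgood_closed (C : set 'rV[R]_d) : closed C ->
  measurable (Zgood @` C : set ZTd).
Proof.
move=> cC; rewrite (_ : Zgood @` C = Zgood @` setT `\` Zgood @` (~` C)).
  by apply: measurableD; apply: mZgood => //; [exact: openT | rewrite openC].
apply/seteqP; split.
  move=> _ [z Cz <-]; split; first by exists z.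
  by move=> [z' nC [e]]; apply: nC; rewrite e.
move=> _ [[z _ <-] H]; exists z => //; apply: contrapT => nCz; apply: H.
by exists z.
Qed.

Lemma mZset (C : set 'rV[R]_d) : closed C -> measurable (Zset C : set ZTd).
Proof.
move=> cC; rewrite (_ : Zset C = Zgood @` C `|` [set Zempty_d] `|` [set Zempty_s]).
  by apply: measurableU; [apply: measurableU|]; [exact: mZgood_closed|exact: mZd|exact: mZs].
apply/seteqP; split => -[z||] //=.
- by move=> Cz; left; left; exists z.
- by move=> _; left; right.
- by move=> _; right.
- by move=> [[[z' Cz' [<-]]|]|].
Qed.

Lemma mZpre (C : set ZTd) : measurable C ->
  measurable (Zgood @^-1` C : set (Bor R d)).
Proof.
move=> mC.
pose S := [set C : set ZTd | measurable (Zgood @^-1` C : set (Bor R d))].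
suff : <<s (@GZ R d) >> `<=` S by apply.
apply: smallest_sub.
  split.
  - by rewrite /S /= preimage_set0.
  - by move=> B SB; rewrite /S /= setTD preimage_setC; apply: measurableC.
  - by move=> F SF; rewrite /S /= preimage_bigcup; apply: bigcupT_measurable.
move=> B [ [U0 oU0 BO] | [BO|BO] ]; rewrite /S /= BO.
- rewrite (_ : _ @^-1` _ = U0); first exact: mBor_open.
  apply/seteqP; split => x /=; last by exists x.
  by move=> [y Oy [<-]].
- by rewrite (_ : _ @^-1` _ = set0) //; apply/seteqP; split => x.
- by rewrite (_ : _ @^-1` _ = set0) //; apply/seteqP; split => x.
Qed.
End ZTmeas.
Section Integ.
Context d (T : measurableType d) (R : realType) (mu : {measure set T -> \bar R}).
Hypothesis muT : (mu setT < +oo)%E.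

Definition bdd (f : T -> R) := measurable_fun setT f /\
  exists M, 0 <= M /\ forall t, `|f t| <= M.

Lemma bdd_int f : bdd f -> mu.-integrable setT (EFin \o f).
Proof.
case=> mf [M [M0 HM]]; apply/integrableP; split; first exact/measurable_EFinP.
have mfE : measurable_fun setT (EFin \o f) by exact/measurable_EFinP.
have M0' : (0 <= M%:E)%E by rewrite lee_fin.
have ae : {ae mu, forall x, setT x -> (`|(EFin \o f) x| <= M%:E)%E}.
  by apply: aeW => t _ /=; rewrite lee_fin.
apply: le_lt_trans (integral_le_bound (mu:=mu) M%:E measurableT mfE M0' ae) _.
by apply: lte_mul_pinfty => //.
Qed.

Lemma bddD f g : bdd f -> bdd g -> bdd (fun t => f t + g t).
Proof.
case=> mf [M [M0 HM]] [mg [N [N0 HN]]]; split; first exact: measurable_funD.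
exists (M + N); split; first by rewrite addr_ge0.
move=> t; rewrite (le_trans (ler_normD _ _))//; exact: lerD.
Qed.

Lemma bddN f : bdd f -> bdd (fun t => - f t).
Proof.
case=> mf [M [M0 HM]]; split; first exact: measurable_funN.
by exists M; split => // t; rewrite normrN.
Qed.

Lemma bddB f g : bdd f -> bdd g -> bdd (fun t => f t - g t).
Proof. by move=> bf bg; apply: bddD => //; exact: bddN. Qed.

Lemma RintD f g : bdd f -> bdd g ->
  Rintegral mu setT (fun t => f t + g t) =
  Rintegral mu setT f + Rintegral mu setT g.
Proof. by move=> bf bg; apply: RintegralD => //; exact: bdd_int. Qed.

Lemma RintB f g : bdd f -> bdd g ->
  Rintegral mu setT (fun t => f t - g t) =
  Rintegral mu setT f - Rintegral mu setT g.
Proof. by move=> bf bg; apply: RintegralB => //; exact: bdd_int. Qed.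


Lemma Rint_ae f N : bdd f -> measurable N -> mu N = 0%E ->
  (forall t, ~ N t -> 0 <= f t) ->
  0 <= Rintegral mu setT f /\
  (Rintegral mu setT f = 0 -> exists N', [/\ measurable N', mu N' = 0%E &
     forall t, ~ N' t -> f t = 0]).
Proof.
move=> bf mN N0 fN.
have mf : measurable_fun setT (EFin \o f) by case: bf => mf _; exact/measurable_EFinP.
have mfa : measurable_fun setT (fun t => `|(EFin \o f) t|)%E.
  exact: measurableT_comp.
have E : (\int[mu]_x (EFin \o f) x = \int[mu]_x `|(EFin \o f) x|)%E.
  apply: ae_eq_integral => //.
  exists N; split => // t /= h; apply: contrapT => Nt; apply: h => _.
  by rewrite ger0_norm //; exact: fN.
have fin : (\int[mu]_x `|(EFin \o f) x| \is a fin_num)%E.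
  by rewrite -E; apply: integrable_fin_num => //; exact: bdd_int.
split; first by rewrite /Rintegral E fine_ge0 // integral_ge0.
rewrite /Rintegral E => h0.
have : (\int[mu]_x `|(EFin \o f) x| = 0)%E by rewrite -(fineK fin) h0.
move/(ae_eq_integral_abs mu measurableT mf) => [N' [mN' N'0 HN']].
exists N'; split => // t Nt; apply: contrapT => ft; apply: Nt; apply: HN' => /=.
by move=> /(_ I) [].
Qed.
End Integ.

Lemma bdd_fst (R : realType) d1 d2 (T1 : measurableType d1) (T2 : measurableType d2)
  (f : T1 -> R) : bdd f -> bdd ((f \o fst) : T1 * T2 -> R).
Proof.
case=> mf [M [M0 HM]]; split; first by apply: measurableT_comp => //; exact: measurable_fst.
by exists M; split => // t; exact: HM.
Qed.

Lemma bdd_snd (R : realType) d1 d2 (T1 : measurableType d1) (T2 : measurableType d2)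
  (f : T2 -> R) : bdd f -> bdd ((f \o snd) : T1 * T2 -> R).
Proof.
case=> mf [M [M0 HM]]; split; first by apply: measurableT_comp => //; exact: measurable_snd.
by exists M; split => // t; exact: HM.
Qed.

Lemma RintN (R : realType) d (T : measurableType d) (mu : {measure set T -> \bar R})
  (f : T -> R) : (mu setT < +oo)%E -> bdd f ->
  Rintegral mu setT (fun t => - f t) = - Rintegral mu setT f.
Proof.
move=> muT bf.
have b0 : bdd (fun _ : T => (0 : R)).
  by split; [exact: measurable_cst | exists 0; split => // t; rewrite normr0].
have := RintB muT b0 bf.
rewrite (_ : (fun t => 0 - f t) = (fun t => - f t)); last by apply/funext => t; rewrite sub0r.
move=> ->; rewrite (_ : Rintegral mu setT (fun _ => 0) = 0) ?sub0r //.
by rewrite /Rintegral integral0.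
Qed.
Section Marg.
Context (R : realType) d1 d2 (T1 : measurableType d1) (T2 : measurableType d2).

Lemma marg_fst (g1 g2 : {measure set (T1 * T2)%type -> \bar R}) (g : T1 -> R) :
  (g1 setT < +oo)%E -> (g2 setT < +oo)%E ->
  (forall B, measurable B -> g1 (B `*` setT) = g2 (B `*` setT)) ->
  bdd g ->
  Rintegral g1 setT (g \o fst) = Rintegral g2 setT (g \o fst).
Proof.
move=> f1 f2 H [mg [M [M0 HM]]].
have bf : bdd ((g \o fst) : T1 * T2 -> R).
  split; first by apply: measurableT_comp => //; exact: measurable_fst.
  by exists M; split => // t; exact: HM.
have i1 := bdd_int f1 bf; have i2 := bdd_int f2 bf.
rewrite /Rintegral; congr fine.
have mgE : measurable_fun setT (EFin \o g) by exact/measurable_EFinP.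
rewrite -[LHS](@integral_pushforward _ _ _ _ _ fst measurable_fst g1 setT (EFin \o g) mgE) //.
rewrite -[RHS](@integral_pushforward _ _ _ _ _ fst measurable_fst g2 setT (EFin \o g) mgE) //.
apply: eq_measure_integral => A mA _.
change (g1 (fst @^-1` A) = g2 (fst @^-1` A)).
rewrite (_ : fst @^-1` A = A `*` setT); first exact: H.
by apply/seteqP; split => -[x y]; rewrite /setX /preimage /=; [move=> ?; split | case].
Unshelve. all: exact: measurable_fst.
Qed.
End Marg.
Section MargSnd.
Context (R : realType) d1 d2 d3 (T1 : measurableType d1) (T2 : measurableType d2)
  (T3 : measurableType d3).

Lemma marg_snd (g1 : {measure set (T1 * T3)%type -> \bar R})
  (g2 : {measure set (T2 * T3)%type -> \bar R}) (g : T3 -> R) (G : set T3) :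
  (g1 setT < +oo)%E -> (g2 setT < +oo)%E -> measurable G ->
  (forall C, measurable C -> C `<=` G -> g1 (setT `*` C) = g2 (setT `*` C)) ->
  (forall z, ~ G z -> g z = 0) ->
  bdd g ->
  Rintegral g1 setT (g \o snd) = Rintegral g2 setT (g \o snd).
Proof.
move=> f1 f2 mG H g0 [mg [M [M0 HM]]].
have bf1 : bdd ((g \o snd) : T1 * T3 -> R).
  split; first by apply: measurableT_comp => //; exact: measurable_snd.
  by exists M; split => // t; exact: HM.
have bf2 : bdd ((g \o snd) : T2 * T3 -> R).
  split; first by apply: measurableT_comp => //; exact: measurable_snd.
  by exists M; split => // t; exact: HM.
have i1 := bdd_int f1 bf1; have i2 := bdd_int f2 bf2.
rewrite /Rintegral; congr fine.
have mgE : measurable_fun setT (EFin \o g) by exact/measurable_EFinP.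
rewrite -[LHS](@integral_pushforward _ _ _ _ _ snd measurable_snd g1 setT (EFin \o g) mgE) //.
rewrite -[RHS](@integral_pushforward _ _ _ _ _ snd measurable_snd g2 setT (EFin \o g) mgE) //.
have E : (EFin \o g) = ((EFin \o g) \_ G).
  apply/funext => z; rewrite patchE; case: ifPn => // /negP zG /=.
  by rewrite g0 //; move=> Gz; apply: zG; exact: mem_set.
rewrite E -!integral_mkcond.
apply: eq_measure_integral => C mC CG.
change (g1 (snd @^-1` C) = g2 (snd @^-1` C)).
rewrite (_ : snd @^-1` C = setT `*` C); last first.
  by apply/seteqP; split => -[x y]; rewrite /setX /preimage /=; [move=> ?; split | case].
rewrite (_ : snd @^-1` C = setT `*` C); first exact: H.
by apply/seteqP; split => -[x y]; rewrite /setX /preimage /=; [move=> ?; split | case].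
Unshelve. all: exact: measurable_snd.
Qed.
End MargSnd.
Section Side.
Variables (R : realType) (n d : nat) (A : set 'rV[R]_n) (Z0 : set 'rV[R]_d).
Variables (w : 'rV[R]_n -> 'rV[R]_d -> R) (cd cs : R).
Hypothesis cA : compact A.
Hypothesis cZ : compact Z0.
Hypothesis wc : forall x z, A x -> Z0 z ->
  {for (x, z), continuous (fun q : 'rV[R]_n * 'rV[R]_d => w q.1 q.2)}.

Definition WZ x (z : Zpt R d) : R :=
  match z with Zgood z0 => w x z0 | Zempty_d => cd | Zempty_s => cs end.
Definition gain (q : Zpt R d -> R) x z := WZ x z - q z.
Definition Ind q x := sup [set gain q x z | z in Zset Z0].
Definition Dm q x := [set z | Zset Z0 z /\
  forall z', Zset Z0 z' -> gain q x z' <= gain q x z].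
Definition psys (q : Zpt R d -> R) := [/\ q Zempty_d = 0, q Zempty_s = 0 &
  {within Z0, continuous (fun z0 => q (Zgood z0))}].

Lemma w_bound : exists M, forall x z, A x -> Z0 z -> `|w x z| <= M.
Proof.
have cK : compact (A `*` Z0) := compact_setX cA cZ.
have cf : {within A `*` Z0, continuous (fun q : 'rV[R]_n * 'rV[R]_d => w q.1 q.2)}.
  apply: continuous_in_subspaceT => -[x z] /set_mem [Ax Zz]; exact: wc.
have /compact_bounded := continuous_compact cf cK.
move=> /ex_strict_bound_gt0 [M _ HM]; exists M => x z Ax Zz.
apply/ltW; apply: (HM (w x z)); by exists (x, z).
Qed.

Lemma q_bound q : psys q -> exists M, forall z, Zset Z0 z -> `|q z| <= M.
Proof.
case=> qd qs qc.
have /compact_bounded := continuous_compact qc cZ.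
move=> /ex_strict_bound_gt0 [M M0 HM]; exists M => -[z0||] /=.
- by move=> Zz; apply/ltW; apply: (HM (q (Zgood z0))); exists z0.
- by rewrite qd normr0 ltW.
- by rewrite qs normr0 ltW.
Qed.

Lemma gain_bound q : psys q -> exists M, 0 <= M /\
  forall x z, A x -> Zset Z0 z -> `|gain q x z| <= M.
Proof.
move=> /q_bound [Mq Hq]; have [Mw Hw] := w_bound.
exists (`|Mw| + `|cd| + `|cs| + `|Mq|); split; first by rewrite !addr_ge0.
move=> x z Ax Zz; rewrite /gain (le_trans (ler_normB _ _))//.
have := Hq z Zz; case: z Zz => [z0||] /= Zz Hqz.
- have := Hw x z0 Ax Zz; have := ler_norm Mw; have := ler_norm Mq.
  have := normr_ge0 cd; have := normr_ge0 cs; lra.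
- have := ler_norm Mq; have := normr_ge0 Mw; have := normr_ge0 cs; lra.
- have := ler_norm Mq; have := normr_ge0 Mw; have := normr_ge0 cd; lra.
Qed.

Lemma Zset_d : Zset Z0 (@Zempty_d R d). Proof. by []. Qed.

Lemma Ind_ne q x : [set gain q x z | z in Zset Z0] !=set0.
Proof. by exists (gain q x Zempty_d); exists Zempty_d. Qed.

Lemma Ind_ub q x : psys q -> A x -> has_ubound [set gain q x z | z in Zset Z0].
Proof.
move=> /gain_bound [M [_ HM]] Ax; exists M => _ [z Zz <-].
exact: le_trans (ler_norm _) (HM x z Ax Zz).
Qed.

Lemma Ind_ge q x z : psys q -> A x -> Zset Z0 z -> gain q x z <= Ind q x.
Proof. by move=> qs Ax Zz; apply: (ub_le_sup (Ind_ub qs Ax)); exists z. Qed.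

Lemma Ind_le q x c : (forall z, Zset Z0 z -> gain q x z <= c) -> Ind q x <= c.
Proof. by move=> H; apply: ge_sup (Ind_ne q x) _ => _ [z Zz <-]; exact: H. Qed.

Lemma Dm_Ind q x z : psys q -> A x -> Dm q x z -> gain q x z = Ind q x.
Proof.
move=> qs Ax [Zz H]; apply/eqP; rewrite eq_le; apply/andP; split; first exact: Ind_ge.
exact: Ind_le.
Qed.

Lemma Ind_bound q : psys q -> exists M, 0 <= M /\ forall x, A x -> `|Ind q x| <= M.
Proof.
move=> qs; have [M [M0 HM]] := gain_bound qs; exists M; split => // x Ax.
rewrite ler_norml; apply/andP; split.
- have := HM x _ Ax Zset_d; rewrite ler_norml => /andP[+ _].
  move=> h; exact: le_trans h (Ind_ge qs Ax Zset_d).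
- apply: Ind_le => z Zz; have := HM x z Ax Zz; rewrite ler_norml => /andP[_ ->] //.
Qed.

Lemma Ind_gt q x c : c < Ind q x -> exists2 z, Zset Z0 z & c < gain q x z.
Proof. by move=> /(sup_gt (Ind_ne q x)) [_ [z Zz <-] h]; exists z. Qed.

Lemma gain_cont q x z : A x -> Zset Z0 z -> {for x, continuous (fun y => gain q y z)}.
Proof.
move=> Ax; case: z => [z0||] /= Zz; rewrite /gain /=; last 2 first.
- exact: cst_continuous.
- exact: cst_continuous.
have pc : {for x, continuous (fun y : 'rV[R]_n => (y, z0))}.
  exact: (@cvg_pair _ _ _ (nbhs x) _ _ _ _ _ id (fun=> z0) cvg_id (cvg_cst z0)).
have h := continuous_comp pc (wc Ax Zz).
exact: (cvgB h (cvg_cst _)).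
Qed.

Lemma mA : measurable (A : set (Bor R n)).
Proof. apply: mBor_closed; apply: compact_closed cA; exact: rV_hausdorff. Qed.

Lemma Ind_meas q : psys q -> measurable_fun (A : set (Bor R n)) (Ind q).
Proof.
move=> qs; apply: meas_gt => c.
have [U oU ->] : exists2 U, open U & A `&` [set x | c < Ind q x] = A `&` U.
  apply: relopen => x Ax /Ind_gt [z Zz cz].
  have /cvgr_gt /(_ _ cz) := gain_cont (q:=q) Ax Zz.
  apply: filterS => y cy Ay; exact: lt_le_trans cy (Ind_ge qs Ay Zz).
by apply: measurableI; [exact: mA | exact: mBor_open].
Qed.

Definition qt (q : Zpt R d -> R) : ZT R d -> R := q \_ (Zset Z0).

Lemma qt_meas q : psys q -> measurable_fun (setT : set (ZT R d)) (qt q).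
Proof.
case=> qd qs qc.
have mZ : measurable (Zset Z0 : set (ZT R d)).
  by apply: mZset; apply: compact_closed cZ; exact: rV_hausdorff.
apply/(measurable_restrictT _ mZ); apply: meas_gt => c.
have [U oU EO] : exists2 U, open U &
    Z0 `&` [set z0 | c < q (Zgood z0)] = Z0 `&` U.
  apply: relopen => z0 Zz cz.
  have /cvgr_gt /(_ _ cz) := qc z0.
  move=> h.
  have h2 : within Z0 (nbhs z0) [set t | c < q (Zgood t)].
    by rewrite (nbhs_subspace_in Zz); exact: h.
  exact: h2.
rewrite (_ : _ `&` _ = (Zgood @` Z0 `&` Zgood @` U) `|`
   (if c < 0 then [set Zempty_d] `|` [set Zempty_s] else set0)).
  apply: measurableU.
    apply: measurableI; first by apply: mZgood_closed; apply: compact_closed cZ; exact: rV_hausdorff.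
    exact: mZgood.
  by case: ifP => _ //; apply: measurableU; [exact: mZd|exact: mZs].
apply/seteqP; split => -[z0||] /=.
- move=> [Zz cz]; left; split; first by exists z0.
  have : (Z0 `&` U) z0 by rewrite -EO.
  by move=> [_ Uz]; exists z0.
- by rewrite qd => -[_ c0]; right; rewrite c0; left.
- by rewrite qs => -[_ c0]; right; rewrite c0; right.
- case; last by case: ifP => _ // [] //.
  move=> [[a Za ea] [b Ub eb]]; case: ea => ea; case: eb => eb; subst a b.
  have : (Z0 `&` U) z0 by split.
  by rewrite -EO => -[].
- case=> [[[a _ //] _]|]; case: ifP => // c0 _; split => //; rewrite qd; exact: c0.
- case=> [[[a _ //] _]|]; case: ifP => // c0 _; split => //; rewrite qs; exact: c0.
Qed.
Lemma notDm_lt q x z : psys q -> A x -> Zset Z0 z -> ~ Dm q x z ->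
  gain q x z < Ind q x.
Proof.
move=> qs Ax Zz nD; case: ltP => // h; exfalso; apply: nD; split => // z' Zz'.
exact: le_trans (Ind_ge qs Ax Zz') h.
Qed.

Lemma w_contz x : A x -> {within Z0, continuous (fun z0 => w x z0)}.
Proof.
move=> Ax; apply: continuous_in_subspaceT => z0 /set_mem Zz.
have pc : {for z0, continuous (fun z : 'rV[R]_d => (x, z))}.
  exact: (@cvg_pair _ _ _ (nbhs z0) _ _ _ _ _ (fun=> x) id (cvg_cst x) cvg_id).
exact: (continuous_comp pc (wc Ax Zz)).
Qed.

Lemma relopen_lt (g : 'rV[R]_d -> R) c : {within Z0, continuous g} ->
  exists2 U, open U & Z0 `&` [set z0 | g z0 < c] = Z0 `&` U.
Proof.
move=> gc; apply: relopen => z0 Zz cz.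
have /cvgr_lt /(_ _ cz) := gc z0; move=> h.
have h2 : within Z0 (nbhs z0) [set t | g t < c].
  by rewrite (nbhs_subspace_in Zz); exact: h.
exact: h2.
Qed.

Lemma gap_lemma q x (g : Zpt R d -> R) c : psys q -> A x ->
  {within Z0, continuous (fun z0 => g (Zgood z0))} ->
  (forall z, Zset Z0 z -> c <= g z -> ~ Dm q x z) ->
  exists2 del, 0 < del & forall z, Zset Z0 z -> c <= g z ->
    gain q x z <= Ind q x - del.
Proof.
move=> qs Ax gc H.
have hex e : Zset Z0 e -> exists2 dl, 0 < dl &
    (c <= g e -> gain q x e <= Ind q x - dl).
  move=> Ze; case: (leP c (g e)) => h.
    exists (Ind q x - gain q x e); last by move=> _; lra.
    by rewrite subr_gt0; apply: notDm_lt => //; exact: H.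
  by exists 1 => //; move=> h'; exfalso; lra.
have [dld dld0 Hd] := hex _ Zset_d.
have [dls dls0 Hs] := hex (@Zempty_s R d) I.
have [dlg dlg0 Hg] : exists2 dl, 0 < dl & forall z0, Z0 z0 ->
    c <= g (Zgood z0) -> gain q x (Zgood z0) <= Ind q x - dl.
  have [U oU EU] := relopen_lt c gc.
  pose F0 := Z0 `&` ~` U.
  have cF : compact F0 := compact_closedI cZ (open_closedC oU).
  have F0P z0 : Z0 z0 -> c <= g (Zgood z0) -> F0 z0.
    move=> Zz cz; split => // Uz.
    have : (Z0 `&` U) z0 by [].
    by rewrite -EU => -[_ /=]; lra.
  have [[m Fm]|F0e] := pselect (exists z0, F0 z0); last first.
    exists 1 => // z0 Zz cz; exfalso; apply: F0e; exists z0; exact: F0P.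
  have fc : {within F0, continuous (fun z0 => gain q x (Zgood z0))}.
    apply: (continuous_subspaceW (B := Z0)); first by move=> ? [].
    have := within_continuousB (w_contz Ax) (let: And3 _ _ h := qs in h).
    by [].
  have [mm mmF mmax] := compact_EVT_max (ex_intro _ m Fm) cF fc.
  move/set_mem: mmF => [Zmm nUmm].
  have cmm : c <= g (Zgood mm).
    case: leP => // h; exfalso; apply: nUmm.
    have : (Z0 `&` [set z0 | g (Zgood z0) < c]) mm by [].
    by rewrite EU => -[].
  exists (Ind q x - gain q x (Zgood mm)).
    by rewrite subr_gt0; apply: notDm_lt => //; exact: H.
  move=> z0 Zz cz; have := mmax z0 (mem_set (F0P z0 Zz cz)); lra.
exists (Num.min dlg (Num.min dld dls)).
  by rewrite !lt_min dlg0 dld0 dls0.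
move=> z Zz cz; have m1 := ge_min dlg (Num.min dld dls).
have m2 := ge_min dld dls.
have e1 : Num.min dlg (Num.min dld dls) <= dlg by rewrite ge_min lexx.
have e2 : Num.min dlg (Num.min dld dls) <= dld by rewrite !ge_min lexx orbT.
have e3 : Num.min dlg (Num.min dld dls) <= dls by rewrite !ge_min lexx !orbT.
case: z Zz cz => [z0||] /= Zz cz.
- have := Hg z0 Zz cz; lra.
- have := Hd cz; lra.
- have := Hs cz; lra.
Qed.
Definition qmix (q1 q2 : Zpt R d -> R) (N : nat) z :=
  q1 z + (q2 z - q1 z) * (N.+1%:R)^-1.

Lemma psys_mix q1 q2 N : psys q1 -> psys q2 -> psys (qmix q1 q2 N).
Proof.
case=> q1d q1s q1c [q2d q2s q2c]; split; rewrite /qmix ?q1d ?q1s ?q2d ?q2s.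
- by rewrite subrr mul0r addr0.
- by rewrite subrr mul0r addr0.
have hB := within_continuousB q2c q1c.
move=> z; apply: cvgD; first exact: q1c.
by apply: cvgM; [exact: hB | exact: cvg_cst].
Qed.

Lemma gain_mix q1 q2 N x z :
  gain (qmix q1 q2 N) x z = gain q1 x z + (q1 z - q2 z) * (N.+1%:R)^-1.
Proof. rewrite /gain /qmix; ring. Qed.

Lemma mix_bound q1 q2 x dd eps : psys q1 -> psys q2 -> A x ->
  Dm q1 x = [set dd] -> 0 < eps ->
  exists N : nat, Ind (qmix q1 q2 N) x <=
    Ind q1 x + (q1 dd - q2 dd + eps) * (N.+1%:R)^-1.
Proof.
move=> qs1 qs2 Ax Dx e0.
pose g z := q1 z - q2 z; pose c := g dd + eps.
have gc : {within Z0, continuous (fun z0 => g (Zgood z0))}.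
  case: qs1 => _ _ h1; case: qs2 => _ _ h2.
  exact: within_continuousB h1 h2.
have Hn : forall z, Zset Z0 z -> c <= g z -> ~ Dm q1 x z.
  move=> z Zz cz; rewrite Dx => /= zd; move: cz; rewrite zd /c; lra.
have [del del0 Hdel] := @gap_lemma q1 x g c qs1 Ax gc Hn.
have [M1 HM1] := q_bound qs1; have [M2 HM2] := q_bound qs2.
pose Cg := `|M1| + `|M2|.
have gb z : Zset Z0 z -> `|g z| <= Cg.
  move=> Zz; rewrite /g (le_trans (ler_normB _ _))//.
  have := HM1 z Zz; have := HM2 z Zz; have := ler_norm M1; have := ler_norm M2.
  rewrite /Cg; lra.
pose K := (Cg + `|c|) / del.
pose N := Num.Def.trunc K.
exists N.
have kpos : 0 < N.+1%:R :> R by rewrite ltr0n.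
have kK : K < N.+1%:R := truncnS_gt K.
have Hk : Cg + `|c| < del * N.+1%:R.
  by move: kK; rewrite /K ltr_pdivrMr// mulrC.
apply: Ind_le => z Zz; rewrite gain_mix.
have g1 : gain q1 x z <= Ind q1 x := Ind_ge qs1 Ax Zz.
case: (leP c (g z)) => cz.
- have h1 := Hdel z Zz cz.
  have h2 : (g z - c) * (N.+1%:R)^-1 <= del.
    rewrite ler_pdivrMr//; have := gb z Zz; have := ler_norm (g z).
    have := ler_norm c; have := ler_norm (- c); rewrite normrN. lra.
  have -> : (q1 z - q2 z) * (N.+1%:R)^-1 =
      (g z - c) * (N.+1%:R)^-1 + c * (N.+1%:R)^-1 by rewrite /g; ring.
  rewrite /c /g in h1 h2 *; rewrite addrA lerD2r; move: h1 h2.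
  set X := (_ / _); move=> h1 h2; lra.
- have h2 : g z * (N.+1%:R)^-1 <= c * (N.+1%:R)^-1.
    by rewrite ler_pM2r ?invr_gt0// ltW.
  rewrite /c /g in h2 *; exact: lerD g1 h2.
Qed.

Definition hfun q1 q2 N x :=
  Ind q2 x - Ind q1 x - N.+1%:R * (Ind (qmix q1 q2 N) x - Ind q1 x).

Lemma hfun_le q1 q2 N x z : psys q1 -> psys q2 -> A x -> Dm q1 x z ->
  hfun q1 q2 N x <= Ind q2 x - Ind q1 x + q2 z - q1 z.
Proof.
move=> qs1 qs2 Ax Dz.
have Zz : Zset Z0 z by case: Dz.
have := Ind_ge (psys_mix N qs1 qs2) Ax Zz; rewrite gain_mix (Dm_Ind qs1 Ax Dz).
move=> h; rewrite /hfun.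
have kpos : 0 < N.+1%:R :> R by rewrite ltr0n.

have : (q1 z - q2 z) <= N.+1%:R * (Ind (qmix q1 q2 N) x - Ind q1 x).
  rewrite mulrC -ler_pdivrMr//; move: h.
  set t := (q1 z - q2 z) / N.+1%:R; move=> h; lra.
lra.
Qed.

Lemma hfun_gt q1 q2 x dd : psys q1 -> psys q2 -> A x -> Dm q1 x = [set dd] ->
  0 < Ind q2 x - Ind q1 x + q2 dd - q1 dd ->
  exists N, 0 < hfun q1 q2 N x.
Proof.
move=> qs1 qs2 Ax Dx Kp.
have e0 : 0 < (Ind q2 x - Ind q1 x + q2 dd - q1 dd) / 2 by rewrite divr_gt0.
have [N HN] := mix_bound qs1 qs2 Ax Dx e0.
exists N; rewrite /hfun.
have kpos : 0 < N.+1%:R :> R by rewrite ltr0n.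

have : N.+1%:R * (Ind (qmix q1 q2 N) x - Ind q1 x) <=
    q1 dd - q2 dd + (Ind q2 x - Ind q1 x + q2 dd - q1 dd) / 2.
  rewrite mulrC -ler_pdivlMr//; move: HN.
  set t := (_ + _) / N.+1%:R; move=> HN; lra.
lra.
Qed.
Lemma bdd_U q : psys q -> bdd ((Ind q \_ A) : Bor R n -> R).
Proof.
move=> qs; split.
  by apply/(measurable_restrictT _ mA); exact: Ind_meas.
have [M [M0 HM]] := Ind_bound qs; exists M; split => // x.
rewrite patchE; case: ifPn => [/set_mem Ax|_]; first exact: HM.
by rewrite normr0.
Qed.

Lemma bdd_qt q : psys q -> bdd (qt q : ZT R d -> R).
Proof.
move=> qs; split; first exact: qt_meas.
have [M HM] := q_bound qs; exists M; split.
  exact: le_trans (normr_ge0 _) (HM _ Zset_d).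
move=> z; rewrite /qt patchE; case: ifPn => [/set_mem Zz|_]; first exact: HM.
by rewrite normr0 (le_trans (normr_ge0 _) (HM _ Zset_d)).
Qed.

Definition Kf q1 q2 : Bor R n * ZT R d -> R := fun t =>
  (((Ind q2 \_ A) \o fst) t - ((Ind q1 \_ A) \o fst) t) +
  (((qt q2) \o snd) t - ((qt q1) \o snd) t).

Lemma Kf_graph q1 q2 x z : A x -> Zset Z0 z ->
  Kf q1 q2 (x, z) = Ind q2 x - Ind q1 x + q2 z - q1 z.
Proof.
move=> Ax Zz; rewrite /Kf /qt /= !patchE mem_set // mem_set //.
ring.
Qed.

Lemma side_main q1 q2 (g : {measure set (Bor R n * ZT R d)%type -> \bar R}) :
  psys q1 -> psys q2 -> (g setT < +oo)%E ->
  g.-negligible (~` [set t | A t.1 /\ Dm q1 t.1 t.2]) ->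
  [/\ bdd (Kf q1 q2), 0 <= Rintegral g setT (Kf q1 q2) &
     (Rintegral g setT (Kf q1 q2) = 0 -> exists N, [/\ measurable N, g N = 0%E &
        forall t, ~ N t -> [/\ A t.1, Dm q1 t.1 t.2 & Kf q1 q2 t = 0]])].
Proof.
move=> qs1 qs2 gT [N0 [mN0 gN0 HN0]].
have bK : bdd (Kf q1 q2).
  apply: bddD; apply: bddB.
  - exact/bdd_fst/bdd_U.
  - exact/bdd_fst/bdd_U.
  - exact/bdd_snd/bdd_qt.
  - exact/bdd_snd/bdd_qt.
have gr t : ~ N0 t -> A t.1 /\ Dm q1 t.1 t.2.
  by move=> nt; apply: contrapT => h; apply: nt; apply: HN0.
have K0 t : ~ N0 t -> 0 <= Kf q1 q2 t.
  case: t => x z /gr [/= Ax Dz]; have Zz : Zset Z0 z by case: Dz.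
  rewrite Kf_graph //; have := Ind_ge qs2 Ax Zz; have := Dm_Ind qs1 Ax Dz.
  rewrite /gain; lra.
have [h0 h1] := Rint_ae gT bK mN0 gN0 K0.
split => // /h1 [N1 [mN1 gN1 HN1]].
exists (N0 `|` N1); split.
- exact: measurableU.
- apply/eqP; rewrite eq_le measure_ge0 andbT.
  have e : (g N0 + g N1 = 0)%E by rewrite gN0 gN1 adde0.
  apply: le_trans (measureU2 g mN0 mN1) _.
  by rewrite le_eqVlt; apply/orP; left; apply/eqP; exact: e.
- move=> t nt; have n0 : ~ N0 t by move=> h; apply: nt; left.
  have n1 : ~ N1 t by move=> h; apply: nt; right.
  by have [a b] := gr t n0; split => //; exact: HN1.
Qed.

Lemma Kf_decomp q1 q2 (g : {measure set (Bor R n * ZT R d)%type -> \bar R}) :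
  psys q1 -> psys q2 -> (g setT < +oo)%E ->
  Rintegral g setT (Kf q1 q2) =
  (Rintegral g setT ((Ind q2 \_ A) \o fst) - Rintegral g setT ((Ind q1 \_ A) \o fst)) +
  (Rintegral g setT (qt q2 \o snd) - Rintegral g setT (qt q1 \o snd)).
Proof.
move=> qs1 qs2 gT.
have b1 := bdd_fst (ZT R d) (bdd_U qs1); have b2 := bdd_fst (ZT R d) (bdd_U qs2).
have c1 := bdd_snd (Bor R n) (bdd_qt qs1); have c2 := bdd_snd (Bor R n) (bdd_qt qs2).
rewrite /Kf (RintD gT (bddB b2 b1) (bddB c2 c1)).
by rewrite (RintB gT b2 b1) (RintB gT c2 c1).
Qed.

Lemma hfun_meas q1 q2 N : psys q1 -> psys q2 ->
  measurable_fun (A : set (Bor R n)) (hfun q1 q2 N).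
Proof.
move=> qs1 qs2; rewrite /hfun.
have m1 := Ind_meas qs1; have m2 := Ind_meas qs2.
have m3 := Ind_meas (psys_mix N qs1 qs2).
apply: measurable_funB; first exact: measurable_funB.
apply: measurable_funM; first exact: measurable_cst.
exact: measurable_funB.
Qed.
End Side.
Section Spec.
Variables (R : realType).

Lemma mc_qt d1 d2 d3 (Z0 : set 'rV[R]_d3) (p : Zpt R d3 -> R)
  (al : {measure set (Bor R d1 * ZT R d3)%type -> \bar R})
  (be : {measure set (Bor R d2 * ZT R d3)%type -> \bar R}) :
  compact Z0 -> psys Z0 p -> (al setT < +oo)%E -> (be setT < +oo)%E ->
  (forall B : set (Bor R d3), measurable B -> B `<=` Z0 ->
     al (setT `*` (Zgood @` B)) = be (setT `*` (Zgood @` B))) ->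
  Rintegral al setT (qt Z0 p \o snd) = Rintegral be setT (qt Z0 p \o snd).
Proof.
move=> cZ ps aT bT H.
have cZc : closed Z0 by apply: compact_closed cZ; exact: rV_hausdorff.
apply: (marg_snd aT bT (mZgood_closed cZc)).
- move=> C mC CG.
  have e : Zgood @` (Zgood @^-1` C) = C.
    apply/seteqP; split; first by move=> _ [z Cz <-].
    by move=> z Cz; have [a _ ea] := CG z Cz; exists a => //; rewrite /preimage /= ea.
  rewrite -e; apply: H; first exact: mZpre.
  by move=> z Cz; have [a Za [ea]] := CG _ Cz; rewrite -ea.
- case: ps => pd pss _ z nG; rewrite /qt patchE; case: ifPn => // /set_mem.
  case: z nG => [z0||] /= nG Zz.
  + by exfalso; apply: nG; exists z0.
  + by rewrite pd.
  + by rewrite pss.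
- exact: bdd_qt.
Qed.

Lemma qt_neg d (Z0 : set 'rV[R]_d) (p : Zpt R d -> R) :
  qt Z0 (fun z => - p z) = fun z => - qt Z0 p z.
Proof.
by apply/funext => z; rewrite /qt !patchE; case: ifPn => //; rewrite oppr0.
Qed.

Lemma psysN d (Z0 : set 'rV[R]_d) (p : Zpt R d -> R) :
  psys Z0 p -> psys Z0 (fun z => - p z).
Proof.
case=> pd ps pc; split; rewrite ?pd ?ps ?oppr0 //.
by move=> z; apply: cvgN; exact: pc.
Qed.

Lemma supplyE d2 d3 (Z0 : set 'rV[R]_d3) (v : 'rV[R]_d2 -> 'rV[R]_d3 -> R)
   (p : Zpt R d3 -> R) :
  supply Z0 v p = Dm Z0 (fun y z0 => - v y z0) (-1) 0 (fun z => - p z).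
Proof.
apply/funext => y; apply/seteqP.
have E z : WZ (fun y z0 => - v y z0) (-1) 0 y z = - vZ v y z.
  by case: z => //=; rewrite oppr0.
split => z [Zz H]; split => // z' Zz'; have := H z' Zz'; rewrite /gain !E; lra.
Qed.

Lemma finT d (T : measurableType d) (mu : {finite_measure set T -> \bar R}) :
  (mu setT < +oo)%E.
Proof.
have := fin_num_measure mu setT measurableT.
by rewrite ge0_fin_numE // measure_ge0.
Qed.

Lemma finT2 d d' (T : measurableType d) (T' : measurableType d')
  (mu : {finite_measure set T -> \bar R}) (al : {measure set (T * T')%type -> \bar R}) :
  (forall A : set T, measurable A -> al (A `*` setT) = mu A) -> (al setT < +oo)%E.
Proof. by move=> H; rewrite -setXTT H //; exact: finT. Qed.

End Spec.
Unset Implicit Arguments.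
Theorem mainTheorem4 (R : realType) (d1 d2 d3 : nat)
  (X : set 'rV[R]_d1) (Y : set 'rV[R]_d2) (Z0 : set 'rV[R]_d3)
  (mu : {finite_measure set (Bor R d1) -> \bar R})
  (nu : {finite_measure set (Bor R d2) -> \bar R})
  (u : 'rV[R]_d1 -> 'rV[R]_d3 -> R) (v : 'rV[R]_d2 -> 'rV[R]_d3 -> R) :
  compact X -> compact Y -> compact Z0 ->
  X !=set0 -> Y !=set0 ->
  mu (~` X) = 0%E -> nu (~` Y) = 0%E ->
  regular_near X Z0 u -> regular_near Y Z0 v ->
  forall (p1 p2 : Zpt R d3 -> R)
    (alpha1 alpha2 : {measure set (Bor R d1 * ZT R d3)%type -> \bar R})
    (beta1 beta2 : {measure set (Bor R d2 * ZT R d3)%type -> \bar R}),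
  equilibrium X Y Z0 mu nu u v p1 alpha1 beta1 ->
  equilibrium X Y Z0 mu nu u v p2 alpha2 beta2 ->
  {ae mu, forall x : Bor R d1,
     forall dx1 : Zpt R d3, demand Z0 u p1 x = [set dx1] ->
       demand Z0 u p2 x dx1 /\
       (forall dx2 : Zpt R d3, demand Z0 u p2 x = [set dx2] -> dx1 = dx2)}.
Proof.
move=> cX cY cZ Xne Yne muX nuY rgu rgv p1 p2 al1 al2 be1 be2 eq1 eq2.
case: eq1 => [[ps1 _] [ng1 ma1] [ns1 mb1] mc1].
case: eq2 => [[ps2 _] [ng2 ma2] [ns2 mb2] mc2].
have wcu : forall x z, X x -> Z0 z ->
    {for (x, z), continuous (fun q : 'rV[R]_d1 * 'rV[R]_d3 => u q.1 q.2)}.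
  by case: rgu => U [_ sU cU _ _] x z Xx Zz; apply: cU; apply: sU.
have wcv : forall y z, Y y -> Z0 z ->
    {for (y, z), continuous (fun q : 'rV[R]_d2 * 'rV[R]_d3 => - v q.1 q.2)}.
  case: rgv => U [_ sU cU _ _] y z Yy Zz.
  have h := cU (y, z) (sU (y, z) (conj Yy Zz)); exact: (cvgN h).
have qs1 : psys Z0 p1 := ps1.
have qs2 : psys Z0 p2 := ps2.
have qn1 := psysN qs1; have qn2 := psysN qs2.
have a1T := finT2 ma1; have a2T := finT2 ma2.
have b1T := finT2 mb1; have b2T := finT2 mb2.
rewrite supplyE in ns1; rewrite supplyE in ns2.
have [bD1 ED1 HD1] := @side_main R d1 d3 X Z0 u 0 (-1) cX cZ wcu p1 p2 al1 qs1 qs2 a1T ng1.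
have [bD2 ED2 _] := @side_main R d1 d3 X Z0 u 0 (-1) cX cZ wcu p2 p1 al2 qs2 qs1 a2T ng2.
have [bS1 ES1 _] := @side_main R d2 d3 Y Z0 (fun y z0 => - v y z0) (-1) 0 cY cZ wcv
  _ _ be1 qn1 qn2 b1T ns1.
have [bS2 ES2 _] := @side_main R d2 d3 Y Z0 (fun y z0 => - v y z0) (-1) 0 cY cZ wcv
  _ _ be2 qn2 qn1 b2T ns2.
rewrite (@Kf_decomp R d1 d3 X Z0 u 0 (-1) cX cZ wcu p1 p2 al1 qs1 qs2 a1T) in ED1.
rewrite (@Kf_decomp R d1 d3 X Z0 u 0 (-1) cX cZ wcu p2 p1 al2 qs2 qs1 a2T) in ED2.
rewrite (@Kf_decomp R d2 d3 Y Z0 (fun y z0 => - v y z0) (-1) 0 cY cZ wcv _ _ be1 qn1 qn2 b1T) in ES1.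
rewrite (@Kf_decomp R d2 d3 Y Z0 (fun y z0 => - v y z0) (-1) 0 cY cZ wcv _ _ be2 qn2 qn1 b2T) in ES2.
have mX : measurable (X : set (Bor R d1)).
  by apply: mBor_closed; apply: compact_closed cX; exact: rV_hausdorff.
have mY : measurable (Y : set (Bor R d2)).
  by apply: mBor_closed; apply: compact_closed cY; exact: rV_hausdorff.
have eU1 := marg_fst a1T a2T (fun B mB => etrans (ma1 B mB) (esym (ma2 B mB)))
  (@bdd_U R d1 d3 X Z0 u 0 (-1) cX cZ wcu _ qs1).
have eU2 := marg_fst a1T a2T (fun B mB => etrans (ma1 B mB) (esym (ma2 B mB)))
  (@bdd_U R d1 d3 X Z0 u 0 (-1) cX cZ wcu _ qs2).
have eV1 := marg_fst b1T b2T (fun B mB => etrans (mb1 B mB) (esym (mb2 B mB)))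
  (@bdd_U R d2 d3 Y Z0 (fun y z0 => - v y z0) (-1) 0 cY cZ wcv _ qn1).
have eV2 := marg_fst b1T b2T (fun B mB => etrans (mb1 B mB) (esym (mb2 B mB)))
  (@bdd_U R d2 d3 Y Z0 (fun y z0 => - v y z0) (-1) 0 cY cZ wcv _ qn2).
have m11 := mc_qt cZ qs1 a1T b1T mc1.
have m12 := mc_qt cZ qs2 a1T b1T mc1.
have m21 := mc_qt cZ qs1 a2T b2T mc2.
have m22 := mc_qt cZ qs2 a2T b2T mc2.
have nq (b : {measure set (Bor R d2 * ZT R d3)%type -> \bar R}) (bT : (b setT < +oo)%E) p : psys Z0 p ->
    Rintegral b setT (qt Z0 (fun z => - p z) \o snd) =
    - Rintegral b setT (qt Z0 p \o snd).
  move=> ps; rewrite qt_neg.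
  have := RintN (f := qt Z0 p \o snd) bT (bdd_snd (Bor R d2) (bdd_qt cZ ps)).
  by [].
rewrite (nq _ b1T _ qs1) (nq _ b1T _ qs2) in ES1.
rewrite (nq _ b2T _ qs1) (nq _ b2T _ qs2) in ES2.
have E0 : Rintegral al1 setT
   (Kf X Z0 u 0 (-1) p1 p2) = 0.
  rewrite (@Kf_decomp R d1 d3 X Z0 u 0 (-1) cX cZ wcu p1 p2 al1 qs1 qs2 a1T).
  lra.
have [N [mN alN HN]] := HD1 E0.
pose hf k := hfun Z0 u 0 (-1) p1 p2 k.
pose B2 := \bigcup_k (X `&` [set x | 0 < hf k x]).
have mB2 : measurable (B2 : set (Bor R d1)).
  apply: bigcupT_measurable => k.
  have mh := @hfun_meas R d1 d3 X Z0 u 0 (-1) cX cZ wcu p1 p2 k qs1 qs2.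
  rewrite (_ : X `&` _ = X `&` hf k @^-1` `]0, +oo[%classic).
    exact: (mh mX _ (measurable_itv _)).
  by apply/seteqP; split => x /=; rewrite in_itv /= andbT.
have B2N : (B2 `*` setT : set (Bor R d1 * ZT R d3)) `<=` N.
  move=> [x z] [[k _ [Xx hk]] _] /=; apply: contrapT => nN.
  have [_ Dz Kz] := HN (x, z) nN.
  have Zz : Zset Z0 z by case: Dz.
  have := @hfun_le R d1 d3 X Z0 u 0 (-1) cX cZ wcu p1 p2 k x z qs1 qs2 Xx Dz.
  move: Kz; rewrite Kf_graph //= => -> h.
  by have := lt_le_trans hk h; rewrite ltxx.
have muB2 : mu B2 = 0%E.
  rewrite -ma1 //; apply: (subset_measure0 _ _ B2N) => //.
  exact: measurableX.
exists (~` X `|` B2); split.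
- by apply: measurableU => //; exact: measurableC.
- apply/eqP; rewrite eq_le measure_ge0 andbT.
  have e : (mu (~` X) + mu B2 = 0)%E by rewrite muX muB2 adde0.
  apply: le_trans (measureU2 mu (measurableC mX) mB2) _.
  by rewrite le_eqVlt; apply/orP; left; apply/eqP; exact: e.
move=> x /= nP; apply: contrapT => nM; apply: nP.
have Xx : X x by apply: contrapT => nX; apply: nM; left.
have nB : ~ B2 x by move=> h; apply: nM; right.
move=> dd Dx.
have Ddd : demand Z0 u p1 x dd by rewrite Dx.
have D2 : demand Z0 u p2 x dd.
  apply: contrapT => nD2.
  have Zd : Zset Z0 dd by case: Ddd.
  have l1 := @notDm_lt R d1 d3 X Z0 u 0 (-1) cX cZ wcu p2 x dd qs2 Xx Zd nD2.
  have l2 := @Dm_Ind R d1 d3 X Z0 u 0 (-1) cX cZ wcu p1 x dd qs1 Xx Ddd.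
  have Kp : 0 < Ind Z0 u 0 (-1) p2 x - Ind Z0 u 0 (-1) p1 x + p2 dd - p1 dd.
    by move: l1 l2; rewrite /gain; lra.
  have [k hk] := @hfun_gt R d1 d3 X Z0 u 0 (-1) cX cZ wcu p1 p2 x dd qs1 qs2 Xx Dx Kp.
  by apply: nB; exists k.
split => // dd2 E2; by move: D2; rewrite E2.
Qed.
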